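(* Let $f\in\mathbb R(x_1,\dots,x_n)$ be a rational function with $\mathrm{pol}(f)$ of codimension at least two in $\mathbb R^n$. Assume that the first partial derivatives $\partial_{x_1}f,\dots,\partial_{x_n}f$, seen on $\mathrm{dom}(f)$, extend continuously to $\mathbb R^n$. Then $f$ extends continuously to $\mathbb R^n$, and this extension belongs to $\mathcal R^1(\mathbb R^n)$.
   Context: For a rational function $f$ on $\mathbb R^n$, $\mathrm{dom}(f)$ is the largest Zariski open set on which $f$ is regular (of the form $p/q$ with polynomials $p,q$, $q$ nonvanishing there) and $\mathrm{pol}(f)=\mathbb R^n\setminus\mathrm{dom}(f)$. For $k\in\mathbb N\cup\{\infty\}$, $\mathcal R^k(\mathbb R^n)$ denotes the ring of functions $f:\mathbb R^n\to\mathbb R$ of class $C^k$ that coincide with a rational function on a nonempty Zariski open subset ($k$-regulous functions). *)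

(* Defs.v *)
From Stdlib Require Import Reals ZArith.
Open Scope R_scope.

(* Points of R^n are represented as  nat -> R ; only the coordinates i < n
   matter (all notions below only look at those coordinates). *)
Definition pt := nat -> R.

(* Polynomial functions in the variables x_0, ..., x_(n-1).
   Since R is infinite this ring is isomorphic to R[x_1,...,x_n]. *)
Inductive is_poly (n : nat) : (pt -> R) -> Prop :=
| poly_const (c : R) : is_poly n (fun _ => c)
| poly_var (i : nat) : (i < n)%nat -> is_poly n (fun x => x i)
| poly_add (p q : pt -> R) :
    is_poly n p -> is_poly n q -> is_poly n (fun x => p x + q x)
| poly_mul (p q : pt -> R) :
    is_poly n p -> is_poly n q -> is_poly n (fun x => p x * q x).

(* A rational function f in R(x_1,...,x_n) is given by a representation p/q
   with p, q polynomials and q not the zero polynomial. *)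
Definition rat_rep (n : nat) (p q : pt -> R) : Prop :=
  is_poly n p /\ is_poly n q /\ exists x, q x <> 0.

Definition same_rat (p q p' q' : pt -> R) : Prop :=
  forall x, p x * q' x = p' x * q x.

Definition in_dom (n : nat) (p q : pt -> R) (x : pt) : Prop :=
  exists p' q', is_poly n p' /\ is_poly n q' /\ same_rat p q p' q' /\ q' x <> 0.

Definition pol (n : nat) (p q : pt -> R) : pt -> Prop :=
  fun x => ~ in_dom n p q x.

Definition zariski_closed (n : nat) (C : pt -> Prop) : Prop :=
  exists S : (pt -> R) -> Prop,
    (forall g, S g -> is_poly n g) /\
    (forall x, C x <-> (forall g, S g -> g x = 0)).

Definition zariski_open (n : nat) (U : pt -> Prop) : Prop :=
  zariski_closed n (fun x => ~ U x).

Definition prime_ideal (n : nat) (P : (pt -> R) -> Prop) : Prop :=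
  (forall g, P g -> is_poly n g) /\
  P (fun _ => 0) /\
  (forall g h, P g -> P h -> P (fun x => g x + h x)) /\
  (forall g h, is_poly n g -> P h -> P (fun x => g x * h x)) /\
  ~ P (fun _ => 1) /\
  (forall g h, is_poly n g -> is_poly n h ->
     P (fun x => g x * h x) -> P g \/ P h).

Definition strict_incl (P Q : (pt -> R) -> Prop) : Prop :=
  (forall g, P g -> Q g) /\ exists g, Q g /\ ~ P g.

Definition van_ideal (n : nat) (V : pt -> Prop) : (pt -> R) -> Prop :=
  fun g => is_poly n g /\ forall x, V x -> g x = 0.

(* dim V <= d : dim V is the Krull dimension of R[x]/I(V), i.e. every chain
   P_0 < P_1 < ... < P_k of prime ideals containing I(V) has k <= d.
   (For V empty there is no such chain; dim = -infinity.) *)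
Definition alg_dim_le (n : nat) (V : pt -> Prop) (d : Z) : Prop :=
  forall (k : nat) (P : nat -> (pt -> R) -> Prop),
    (forall j, (j <= k)%nat ->
       prime_ideal n (P j) /\ (forall g, van_ideal n V g -> P j g)) ->
    (forall j, (j < k)%nat -> strict_incl (P j) (P (S j))) ->
    (Z.of_nat k <= d)%Z.

Definition codim_ge (n : nat) (V : pt -> Prop) (c : nat) : Prop :=
  alg_dim_le n V (Z.of_nat n - Z.of_nat c)%Z.

Definition shift_pt (x : pt) (i : nat) (t : R) : pt :=
  fun j => if Nat.eqb j i then x j + t else x j.

Definition continuous_Rn (n : nat) (F : pt -> R) : Prop :=
  forall x eps, 0 < eps -> exists delta, 0 < delta /\
    forall y, (forall i, (i < n)%nat -> Rabs (y i - x i) < delta) ->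
      Rabs (F y - F x) < eps.

Definition C1_Rn (n : nat) (F : pt -> R) : Prop :=
  continuous_Rn n F /\
  exists dF : nat -> pt -> R,
    (forall i, (i < n)%nat -> continuous_Rn n (dF i)) /\
    (forall i x, (i < n)%nat ->
       derivable_pt_lim (fun t => F (shift_pt x i t)) 0 (dF i x)).

Definition regulous1 (n : nat) (F : pt -> R) : Prop :=
  C1_Rn n F /\
  exists p q : pt -> R, rat_rep n p q /\
  exists U : pt -> Prop, zariski_open n U /\ (exists x, U x) /\
    forall x, U x -> exists p' q', is_poly n p' /\ is_poly n q' /\
      same_rat p q p' q' /\ q' x <> 0 /\ F x = p' x / q' x.

(* Main.v *)
Require Import Defs.
From Stdlib Require Import Reals ZArith Lra Lia Psatz List FunctionalExtensionality ClassicalEpsilon Classical.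
From Coquelicot Require Import Coquelicot.
Open Scope R_scope.

Fixpoint ev (l : list R) (t : R) : R :=
  match l with nil => 0 | a :: m => a + t * ev m t end.

Fixpoint ladd (l1 l2 : list R) : list R :=
  match l1, l2 with
  | nil, _ => l2 | _, nil => l1
  | a :: m1, b :: m2 => (a+b) :: ladd m1 m2 end.
Lemma ev_add l1 l2 t : ev (ladd l1 l2) t = ev l1 t + ev l2 t.
Proof. revert l2; induction l1 as [|a m IH]; intros [|b m2]; simpl; try ring. rewrite IH; ring. Qed.

Definition lscale (c : R) l := map (fun a => c * a) l.
Lemma ev_scale c l t : ev (lscale c l) t = c * ev l t.
Proof. induction l as [|a l IH]; [simpl; ring|]. change (ev (lscale c (a::l)) t) with (c*a + t * ev (lscale c l) t). simpl. rewrite IH; ring. Qed.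

Fixpoint lmul (l1 l2 : list R) : list R :=
  match l1 with nil => nil | a :: m => ladd (lscale a l2) (0 :: lmul m l2) end.
Lemma ev_mul l1 l2 t : ev (lmul l1 l2) t = ev l1 t * ev l2 t.
Proof. induction l1; simpl; [ring|]. rewrite ev_add, ev_scale; simpl; rewrite IHl1; ring. Qed.

Lemma poly_line n r : is_poly n r -> forall y i, exists l, forall s, r (shift_pt y i s) = ev l s.
Proof.
  induction 1; intros y k.
  - exists (c :: nil); intros; simpl; ring.
  - unfold shift_pt. destruct (Nat.eqb i k).
    + exists (y i :: 1 :: nil); intros; simpl; ring.
    + exists (y i :: nil); intros; simpl; ring.
  - destruct (IHis_poly1 y k) as [l1 H1], (IHis_poly2 y k) as [l2 H2].
    exists (ladd l1 l2); intros; rewrite ev_add, H1, H2; auto.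
  - destruct (IHis_poly1 y k) as [l1 H1], (IHis_poly2 y k) as [l2 H2].
    exists (lmul l1 l2); intros; rewrite ev_mul, H1, H2; auto.
Qed.

Lemma divlin r : forall l, exists l', (length l' <= pred (length l))%nat /\
  forall t, ev l t = ev l r + (t - r) * ev l' t.
Proof.
  induction l as [|a m IH].
  - exists nil; split; simpl; [lia| intros; ring].
  - destruct m as [|b m0].
    + exists nil; split; simpl; [lia| intros; ring].
    + destruct IH as [m' [Hl He]]. exists (ev (b :: m0) r :: m'); split.
      * simpl in *; lia.
      * intros t. set (E := ev (b :: m0)) in *.
        change (ev (a :: b :: m0) t) with (a + t * E t).
        change (ev (a :: b :: m0) r) with (a + r * E r).
        rewrite (He t). simpl. ring.
Qed.

Lemma factor_at r : forall N l, (length l <= N)%nat ->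
  (forall t, ev l t = 0) \/ exists k l1, ev l1 r <> 0 /\ forall t, ev l t = (t - r)^k * ev l1 t.
Proof.
  induction N; intros l Hl.
  - destruct l; simpl in Hl; [left; intros; reflexivity| lia].
  - destruct (Req_dec_T (ev l r) 0) as [H0|H0].
    + destruct l as [|a m]. { left; intros; reflexivity. }
      destruct (divlin r (a::m)) as [l' [Hl' He]].
      destruct (IHN l') as [Z|[k [l1 [Hn Hf]]]]. { simpl in *; lia. }
      * left; intros t; rewrite He, H0, Z; ring.
      * right; exists (S k), l1; split; auto; intros t; rewrite He, H0, Hf; simpl; ring.
    + right; exists O, l; split; auto; intros; simpl; ring.
Qed.

Lemma roots N : forall l, (length l <= N)%nat -> (exists s0, ev l s0 <> 0) ->
  exists rl, forall s, ev l s = 0 -> In s rl.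
Proof.
  induction N; intros l Hl [s0 Hs0].
  - destruct l; simpl in *; [lra|lia].
  - destruct (classic (exists r, ev l r = 0)) as [[r Hr]|Hno].
    + destruct l as [|a m]; [simpl in Hs0; lra|].
      destruct (divlin r (a::m)) as [l' [Hl' He]].
      destruct (IHN l') as [rl Hrl]. { simpl in *; lia. }
      { exists s0. intro Z. apply Hs0. rewrite He, Hr, Z; ring. }
      exists (r :: rl). intros s Hs. rewrite He, Hr in Hs.
      destruct (Req_dec_T s r) as [E|E]; [left; auto| right; apply Hrl].
      assert (Hm : (s - r) * ev l' s = 0) by lra.
      apply Rmult_integral in Hm; destruct Hm as [Hm|Hm]; auto.
      exfalso; apply E; lra.
    + exists nil. intros s Hs; exfalso; apply Hno; eauto.
Qed.

Lemma avoid : forall (l : list R) a b, a < b -> exists x, a < x < b /\ ~ In x l.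
Proof.
  induction l as [|r l IH]; intros a b Hab.
  - exists ((a+b)/2); split; [lra| simpl; auto].
  - destruct (Rle_lt_dec r ((a+b)/2)).
    + destruct (IH ((a+b)/2) b) as [x [Hx Hn]]; [lra|].
      exists x; split; [lra|]. simpl; intros [E|E]; [lra| auto].
    + destruct (IH a ((a+b)/2)) as [x [Hx Hn]]; [lra|].
      exists x; split; [lra|]. simpl; intros [E|E]; [lra| auto].
Qed.

Lemma cont_intro f x : (forall eps, 0 < eps -> exists d, 0 < d /\
  forall t, Rabs (t - x) < d -> Rabs (f t - f x) < eps) -> continuity_pt f x.
Proof.
  intros H eps He. destruct (H eps He) as [d [Hd Ht]]. exists d; split; auto.
  intros t [_ Ht']. apply Ht; exact Ht'.
Qed.

Lemma cont_elim f x : continuity_pt f x -> forall eps, 0 < eps -> exists d, 0 < d /\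
  forall t, Rabs (t - x) < d -> Rabs (f t - f x) < eps.
Proof.
  intros H eps He. destruct (H eps He) as [d [Hd Ht]]. exists d; split; auto.
  intros t Htx. destruct (Req_dec_T t x) as [E|E].
  - subst. rewrite Rminus_diag, Rabs_R0; auto.
  - apply Ht. split; [split; [exact I| auto] | exact Htx].
Qed.

Lemma ev_cont l t : continuity_pt (ev l) t.
Proof.
  induction l as [|a l IH]; simpl.
  - apply continuity_pt_const; intros x y; reflexivity.
  - apply (continuity_pt_plus (fun _ => a) (fun t => t * ev l t)).
    + apply continuity_pt_const; intros x y; reflexivity.
    + apply (continuity_pt_mult (fun t => t) (ev l)); auto.
      apply derivable_continuous_pt, derivable_pt_id.
Qed.

Lemma MVI0 f c e a b : a < b -> (forall t, a <= t <= b -> continuity_pt f t) ->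
  (forall t, a < t < b -> exists d, derivable_pt_lim f t d /\ Rabs (d - c) <= e) ->
  Rabs (f b - f a - c * (b - a)) <= e * (b - a).
Proof.
  intros Hab Hc Hd.
  assert (He : 0 <= e).
  { destruct (Hd ((a+b)/2)) as [d [_ Hd']]; [lra|]. eapply Rle_trans; [apply Rabs_pos|exact Hd']. }
  set (df := fun x => match Rlt_dec a x with left _ => match Rlt_dec x b with
      left _ => Derive f x | right _ => c end | right _ => c end).
  assert (Hdf : forall x, Rabs (df x - c) <= e).
  { intros x. unfold df. destruct (Rlt_dec a x); [destruct (Rlt_dec x b)|].
    - destruct (Hd x) as [d [Hd1 Hd2]]; [lra|].
      rewrite (is_derive_unique f x d); [auto|]. apply is_derive_Reals; auto.
    - rewrite Rminus_diag, Rabs_R0; auto.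
    - rewrite Rminus_diag, Rabs_R0; auto. }
  destruct (MVT_gen f a b df) as [x [Hx Heq]].
  - rewrite Rmin_left, Rmax_right by lra. intros x Hx.
    destruct (Hd x Hx) as [d [Hd1 Hd2]].
    unfold df. destruct (Rlt_dec a x); [|lra]. destruct (Rlt_dec x b); [|lra].
    rewrite (is_derive_unique f x d); apply is_derive_Reals; auto.
  - rewrite Rmin_left, Rmax_right by lra. auto.
  - rewrite Heq. replace (df x * (b - a) - c * (b - a)) with ((df x - c) * (b - a)) by ring.
    rewrite Rabs_mult, (Rabs_right (b - a)) by lra.
    apply Rmult_le_compat_r; [lra| apply Hdf].
Qed.

Lemma MVI f c e (l : list R) : forall a b, a < b -> (forall t, a <= t <= b -> continuity_pt f t) ->
  (forall t, a < t < b -> ~ In t l -> exists d, derivable_pt_lim f t d /\ Rabs (d - c) <= e) ->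
  Rabs (f b - f a - c * (b - a)) <= e * (b - a).
Proof.
  induction l as [|r l IH]; intros a b Hab Hc Hd.
  - apply (MVI0 f c e a b Hab Hc). intros; apply Hd; auto.
  - destruct (classic (a < r < b)) as [Hr|Hr].
    + assert (H1 : Rabs (f r - f a - c * (r - a)) <= e * (r - a)).
      { apply IH; [lra| intros; apply Hc; lra|].
        intros t Ht Hn. apply Hd; [lra|]. simpl; intros [E|E]; [lra|auto]. }
      assert (H2 : Rabs (f b - f r - c * (b - r)) <= e * (b - r)).
      { apply IH; [lra| intros; apply Hc; lra|].
        intros t Ht Hn. apply Hd; [lra|]. simpl; intros [E|E]; [lra|auto]. }
      replace (f b - f a - c*(b-a)) with ((f r - f a - c*(r-a)) + (f b - f r - c*(b-r))) by ring.
      eapply Rle_trans; [apply Rabs_triang|].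
      replace (e*(b-a)) with (e*(r-a)+e*(b-r)) by ring. apply Rplus_le_compat; auto.
    + apply IH; auto. intros t Ht Hn. apply Hd; auto. simpl; intros [E|E]; [subst; apply Hr; lra| auto].
Qed.

Lemma pow_le1 x j : 0 <= x <= 1 -> x ^ j <= 1.
Proof.
  intros Hx. induction j; simpl; [lra|].
  assert (0 <= x ^ j) by (apply pow_le; lra). nra.
Qed.

Lemma pow_le_self x j : 0 <= x <= 1 -> (1 <= j)%nat -> x ^ j <= x.
Proof.
  intros Hx Hj. destruct j as [|j]; [lia|]. simpl.
  assert (x ^ j <= 1) by (apply pow_le1; lra). nra.
Qed.

Definition rat1 (P Q : list R) := fun t => ev P t / ev Q t.

Lemma removable (P Q : list R) r M d0 :
  (exists s0, ev Q s0 <> 0) -> ev Q r = 0 -> 0 < d0 ->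
  (forall t, 0 < Rabs (t - r) < d0 -> ev Q t <> 0 ->
     exists d, derivable_pt_lim (rat1 P Q) t d /\ Rabs d <= M) ->
  (exists d, 0 < d /\ forall t, t <> r -> Rabs (t - r) < d -> ev Q t <> 0) /\
  exists L, forall eps, 0 < eps -> exists del, 0 < del /\
    forall t, t <> r -> Rabs (t - r) < del -> Rabs (rat1 P Q t - L) < eps.
Proof.
  intros Hs0 Hr Hd0 Hder.
  destruct (factor_at r (length Q) Q (le_n _)) as [Z|[k [Q1 [HQ1 HQf]]]].
  { destruct Hs0 as [s0 Hs0]; exfalso; apply Hs0, Z. }
  destruct (cont_elim _ _ (ev_cont Q1 r) (Rabs (ev Q1 r) / 2)) as [d1 [Hd1 HQ1c]].
  { apply Rdiv_lt_0_compat; [apply Rabs_pos_lt; auto| lra]. }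
  set (d2 := Rmin d1 d0).
  assert (Hd2 : 0 < d2) by (unfold d2; apply Rmin_pos; auto).
  assert (HQ1nz : forall t, Rabs (t - r) < d2 -> ev Q1 t <> 0).
  { intros t Ht E. assert (H := HQ1c t (Rlt_le_trans _ _ _ Ht (Rmin_l _ _))).
    rewrite E in H. rewrite Rminus_0_l, Rabs_Ropp in H.
    assert (0 < Rabs (ev Q1 r)) by (apply Rabs_pos_lt; auto). lra. }
  assert (HQnz : forall t, t <> r -> Rabs (t - r) < d2 -> ev Q t <> 0).
  { intros t Htr Ht. rewrite HQf. apply Rmult_integral_contrapositive; split.
    - apply pow_nonzero; lra.
    - apply HQ1nz; auto. }
  split; [exists d2; split; auto|].
  destruct (factor_at r (length P) P (le_n _)) as [ZP|[kP [P1 [HP1 HPf]]]].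
  { exists 0. intros eps He. exists 1; split; [lra|]. intros t _ _.
    unfold rat1. rewrite ZP. unfold Rdiv. rewrite Rmult_0_l, Rminus_0_r, Rabs_R0; auto. }
  destruct (le_lt_dec k kP) as [Hk|Hk].
  - set (psi := fun t => (t - r) ^ (kP - k) * ev P1 t / ev Q1 t).
    assert (Hpsi : continuity_pt psi r).
    { unfold psi. apply continuity_pt_div.
      - apply (continuity_pt_mult (fun t => (t - r) ^ (kP - k)) (ev P1)); [|apply ev_cont].
        apply (continuity_pt_comp (fun t => t - r) (fun u => u ^ (kP - k))).
        + apply (continuity_pt_minus (fun t => t) (fun _ => r)).
          * apply derivable_continuous_pt, derivable_pt_id.
          * apply continuity_pt_const; intros x y; reflexivity.
        + apply derivable_continuous_pt, derivable_pt_pow.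
      - apply ev_cont.
      - auto. }
    exists (psi r). intros eps He.
    destruct (cont_elim _ _ Hpsi eps He) as [d3 [Hd3 Hp]].
    exists (Rmin d2 d3); split; [apply Rmin_pos; auto|].
    intros t Htr Ht.
    replace (rat1 P Q t) with (psi t).
    + apply Hp. eapply Rlt_le_trans; [exact Ht| apply Rmin_r].
    + unfold rat1, psi. rewrite HPf, HQf.
      assert (Hq1 : ev Q1 t <> 0) by (apply HQ1nz; eapply Rlt_le_trans; [exact Ht| apply Rmin_l]).
      assert (Hp0 : (t - r) ^ k <> 0) by (apply pow_nonzero; lra).
      assert (Hk' : (t-r)^kP = (t-r)^(kP-k) * (t-r)^k) by (rewrite <- pow_add; f_equal; lia). rewrite Hk'. field; auto.
  - exfalso.
    set (b0 := r + d2 / 2).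
    set (B := Rabs (rat1 P Q b0) + M * d2).
    assert (Hbound : forall t, r < t < b0 -> Rabs (rat1 P Q t) <= B).
    { intros t Ht.
      assert (Hm := MVI0 (rat1 P Q) 0 M t b0 (proj2 Ht)).
      assert (Hc : forall s, t <= s <= b0 -> continuity_pt (rat1 P Q) s /\
                   exists d, derivable_pt_lim (rat1 P Q) s d /\ Rabs (d - 0) <= M).
      { intros s Hs.
        assert (Hs1 : 0 < Rabs (s - r) < d0).
        { rewrite Rabs_right by lra. split; [lra|].
          assert (d2 <= d0) by apply Rmin_r. unfold b0 in Hs. lra. }
        assert (Hs2 : ev Q s <> 0).
        { apply HQnz; [lra|]. rewrite Rabs_right by lra. unfold b0 in Hs. lra. }
        destruct (Hder s Hs1 Hs2) as [d [Hd Hdm]].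
        split.
        - apply derivable_continuous_pt. exists d; exact Hd.
        - exists d; split; auto. rewrite Rminus_0_r; auto. }
      assert (Hm' : Rabs (rat1 P Q b0 - rat1 P Q t - 0 * (b0 - t)) <= M * (b0 - t)).
      { apply Hm. intros s Hs; apply Hc; auto. intros s Hs; apply Hc; lra. }
      assert (HM : 0 <= M).
      { destruct (Hc b0) as [_ [d [_ Hdm]]]; [lra|]. eapply Rle_trans; [apply Rabs_pos| exact Hdm]. }
      rewrite Rmult_0_l, Rminus_0_r in Hm'.
      assert (Rabs (rat1 P Q t) <= Rabs (rat1 P Q b0) + Rabs (rat1 P Q b0 - rat1 P Q t)).
      { replace (rat1 P Q t) with (rat1 P Q b0 - (rat1 P Q b0 - rat1 P Q t)) at 1 by ring.
        apply Rabs_triang_inv2 || (eapply Rle_trans; [apply Rabs_triang|]; rewrite Rabs_Ropp; lra). }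
      unfold B. unfold b0 in *. nra. }
    set (c0 := Rabs (ev P1 r / ev Q1 r)).
    assert (Hc0 : 0 < c0).
    { unfold c0. apply Rabs_pos_lt. unfold Rdiv. apply Rmult_integral_contrapositive; split; auto.
      apply Rinv_neq_0_compat; auto. }
    assert (Hcont : continuity_pt (fun t => ev P1 t / ev Q1 t) r).
    { apply continuity_pt_div; auto using ev_cont. }
    destruct (cont_elim _ _ Hcont (c0 / 2)) as [d3 [Hd3 Hp3]]; [lra|].
    assert (HB : 0 <= B).
    { unfold B. assert (0 <= M).
      { destruct (Hder (r + d2/2)) as [d [_ Hdm]].
        - rewrite Rabs_right by lra. split; [lra|]. assert (d2 <= d0) by apply Rmin_r. lra.
        - apply HQnz; [lra|]. rewrite Rabs_right by lra. lra.
        - eapply Rle_trans; [apply Rabs_pos| exact Hdm]. }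
      assert (0 <= Rabs (rat1 P Q b0)) by apply Rabs_pos. nra. }
    set (eta := Rmin (Rmin (d2 / 4) (d3/2)) (Rmin 1 (c0 / (4 * (B + 1))))).
    assert (Heta : 0 < eta).
    { unfold eta. repeat apply Rmin_pos; try lra. apply Rdiv_lt_0_compat; lra. }
    assert (He1 : eta <= d2 / 4) by (unfold eta; eapply Rle_trans; apply Rmin_l).
    assert (He2 : eta <= d3/2) by (unfold eta; eapply Rle_trans; [apply Rmin_l| apply Rmin_r]).
    assert (He3 : eta <= 1) by (unfold eta; eapply Rle_trans; [apply Rmin_r| apply Rmin_l]).
    assert (He4 : eta <= c0 / (4 * (B + 1))) by (unfold eta; eapply Rle_trans; apply Rmin_r).
    set (t := r + eta).
    assert (Htb : r < t < b0) by (unfold t, b0; lra).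
    assert (Hq1 : ev Q1 t <> 0) by (apply HQ1nz; unfold t; rewrite Rabs_right by lra; lra).
    assert (Heq : rat1 P Q t * (t - r) ^ (k - kP) = ev P1 t / ev Q1 t).
    { unfold rat1. rewrite HPf, HQf.
      assert (Hp0 : (t - r) ^ kP <> 0) by (apply pow_nonzero; unfold t; lra).
      assert (Hk' : (t-r)^k = (t-r)^(k-kP) * (t-r)^kP) by (rewrite <- pow_add; f_equal; lia). rewrite Hk'.
      assert ((t - r) ^ (k - kP) <> 0) by (apply pow_nonzero; unfold t; lra).
      field; auto. }
    assert (H1 : Rabs (ev P1 t / ev Q1 t - ev P1 r / ev Q1 r) < c0 / 2).
    { apply Hp3. replace (t - r) with eta by (unfold t; ring). rewrite Rabs_right; lra. }
    assert (H2 : c0 / 2 < Rabs (ev P1 t / ev Q1 t)).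
    { assert (Rabs (ev P1 r / ev Q1 r) <= Rabs (ev P1 t / ev Q1 t) + Rabs (ev P1 t / ev Q1 t - ev P1 r / ev Q1 r)).
      { replace (ev P1 r / ev Q1 r) with (ev P1 t / ev Q1 t - (ev P1 t / ev Q1 t - ev P1 r / ev Q1 r)) at 1 by ring.
        eapply Rle_trans; [apply Rabs_triang|]. rewrite Rabs_Ropp; lra. }
      fold c0 in H. lra. }
    rewrite <- Heq, Rabs_mult in H2.
    assert (H3 : Rabs ((t - r) ^ (k - kP)) <= eta).
    { unfold t. replace (r + eta - r) with eta by ring. rewrite Rabs_right.
      - apply pow_le_self; [lra| lia].
      - apply Rle_ge, pow_le; lra. }
    assert (H4 := Hbound t Htb).
    assert (H5 : Rabs (rat1 P Q t) * Rabs ((t - r) ^ (k - kP)) <= B * eta).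
    { apply Rmult_le_compat; auto using Rabs_pos. }
    assert (H6 : B * eta <= B * (c0 / (4 * (B + 1)))) by (apply Rmult_le_compat_l; auto).
    assert (H7 : B * (c0 / (4 * (B + 1))) < c0 / 2).
    { unfold Rdiv. rewrite Rinv_mult. 
      assert (0 < / (B + 1)) by (apply Rinv_0_lt_compat; lra).
      assert (B * / (B+1) < 1).
      { apply (Rmult_lt_reg_r (B+1)); [lra|]. rewrite Rmult_assoc, Rinv_l by lra. lra. }
      assert (/4 > 0) by lra. nra. }
    lra.
Qed.

Definition box (n : nat) (x : pt) (d : R) (y : pt) : Prop :=
  forall j, (j < n)%nat -> Rabs (y j - x j) < d.

Definition contAt (n : nat) (F : pt -> R) (x : pt) : Prop :=
  forall eps, 0 < eps -> exists d, 0 < d /\ forall y, box n x d y -> Rabs (F y - F x) < eps.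

Lemma box_mono n x d d' y : d <= d' -> box n x d y -> box n x d' y.
Proof. intros H Hb j Hj; specialize (Hb j Hj); lra. Qed.

Lemma contAt_const n c x : contAt n (fun _ => c) x.
Proof. intros eps He. exists 1. split. lra. intros y _. rewrite Rminus_diag, Rabs_R0; auto. Qed.

Lemma contAt_var n i x : (i < n)%nat -> contAt n (fun y => y i) x.
Proof. intros Hi eps He. exists eps. split; [auto|]. intros y Hy; apply Hy; auto. Qed.

Lemma contAt_add n F G x : contAt n F x -> contAt n G x -> contAt n (fun y => F y + G y) x.
Proof.
  intros HF HG eps He.
  destruct (HF (eps/2)) as [d1 [Hd1 H1]]; [lra|].
  destruct (HG (eps/2)) as [d2 [Hd2 H2]]; [lra|].
  exists (Rmin d1 d2); split; [apply Rmin_pos; auto|]. intros y Hy.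
  assert (A := H1 y (box_mono _ _ _ _ _ (Rmin_l _ _) Hy)).
  assert (B := H2 y (box_mono _ _ _ _ _ (Rmin_r _ _) Hy)).
  replace (F y + G y - (F x + G x)) with ((F y - F x) + (G y - G x)) by ring.
  eapply Rle_lt_trans; [apply Rabs_triang| lra].
Qed.

Lemma contAt_mul n F G x : contAt n F x -> contAt n G x -> contAt n (fun y => F y * G y) x.
Proof.
  intros HF HG eps He.
  set (a := F x). set (b := G x).
  assert (Ha : 0 <= Rabs a) by apply Rabs_pos. assert (Hb : 0 <= Rabs b) by apply Rabs_pos.
  destruct (HF (eps / (2 * (Rabs b + 1)))) as [d1 [Hd1 H1]].
  { apply Rdiv_lt_0_compat; lra. }
  destruct (HG (Rmin 1 (eps / (2 * (Rabs a + 1))))) as [d2 [Hd2 H2]].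
  { apply Rmin_pos; [lra| apply Rdiv_lt_0_compat; lra]. }
  exists (Rmin d1 d2); split; [apply Rmin_pos; auto|]. intros y Hy.
  assert (A := H1 y (box_mono _ _ _ _ _ (Rmin_l _ _) Hy)).
  assert (B := H2 y (box_mono _ _ _ _ _ (Rmin_r _ _) Hy)).
  fold a b in A, B |- *.
  assert (B1 : Rabs (G y - b) < 1) by (eapply Rlt_le_trans; [exact B| apply Rmin_l]).
  assert (B2 : Rabs (G y - b) < eps / (2 * (Rabs a + 1))) by (eapply Rlt_le_trans; [exact B| apply Rmin_r]).
  assert (HGy : Rabs (G y) <= Rabs b + 1).
  { replace (G y) with (b + (G y - b)) by ring. eapply Rle_trans; [apply Rabs_triang| lra]. }
  replace (F y * G y - a * b) with ((F y - a) * G y + a * (G y - b)) by ring.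
  eapply Rle_lt_trans; [apply Rabs_triang|]. rewrite !Rabs_mult.
  assert (E1 : Rabs (F y - a) * Rabs (G y) <= eps / (2 * (Rabs b + 1)) * (Rabs b + 1)).
  { apply Rmult_le_compat; auto using Rabs_pos; lra. }
  assert (E2 : Rabs a * Rabs (G y - b) <= (Rabs a + 1) * (eps / (2 * (Rabs a + 1)))).
  { apply Rmult_le_compat; auto using Rabs_pos; lra. }
  assert (E3 : eps / (2 * (Rabs b + 1)) * (Rabs b + 1) = eps / 2) by (field; lra).
  assert (E4 : (Rabs a + 1) * (eps / (2 * (Rabs a + 1))) = eps / 2) by (field; lra).
  assert (E5 : Rabs a * Rabs (G y - b) < (Rabs a + 1) * (eps / (2 * (Rabs a + 1)))).
  { apply Rle_lt_trans with ((Rabs a) * (eps / (2 * (Rabs a + 1)))).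
    - apply Rmult_le_compat_l; auto; lra.
    - apply Rmult_lt_compat_r; [apply Rdiv_lt_0_compat; lra| lra]. }
  lra.
Qed.

Lemma contAt_inv n G x : G x <> 0 -> contAt n G x -> contAt n (fun y => / G y) x.
Proof.
  intros Hx HG eps He. set (b := G x).
  assert (Hb : 0 < Rabs b) by (apply Rabs_pos_lt; auto).
  destruct (HG (Rmin (Rabs b / 2) (eps * (Rabs b * Rabs b) / 2))) as [d [Hd H]].
  { apply Rmin_pos; [lra|]. apply Rdiv_lt_0_compat; [apply Rmult_lt_0_compat; [lra| nra]| lra]. }
  exists d; split; auto. intros y Hy. specialize (H y Hy). fold b in H |- *.
  assert (H1 : Rabs (G y - b) < Rabs b / 2) by (eapply Rlt_le_trans; [exact H| apply Rmin_l]).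
  assert (H2 : Rabs (G y - b) < eps * (Rabs b * Rabs b) / 2) by (eapply Rlt_le_trans; [exact H| apply Rmin_r]).
  assert (HGy : Rabs b / 2 < Rabs (G y)).
  { assert (Rabs b <= Rabs (G y) + Rabs (G y - b)).
    { replace b with (G y - (G y - b)) at 1 by ring. eapply Rle_trans; [apply Rabs_triang|]. rewrite Rabs_Ropp; lra. }
    lra. }
  assert (Gy0 : G y <> 0) by (intro E; rewrite E, Rabs_R0 in HGy; lra).
  replace (/ G y - / b) with ((b - G y) / (G y * b)) by (field; split; auto).
  unfold Rdiv. rewrite Rabs_mult, Rabs_inv, Rabs_mult.
  rewrite <- Rabs_Ropp. replace (- (b - G y)) with (G y - b) by ring.
  assert (0 < Rabs (G y) * Rabs b) by nra.
  apply (Rmult_lt_reg_r (Rabs (G y) * Rabs b)); auto.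
  rewrite Rmult_assoc, Rinv_l by lra. rewrite Rmult_1_r.
  assert (eps * (Rabs b * Rabs b) / 2 < eps * (Rabs (G y) * Rabs b)).
  { assert (Rabs b * Rabs b / 2 < Rabs (G y) * Rabs b) by nra. nra. }
  lra.
Qed.

Lemma contAt_div n F G x : G x <> 0 -> contAt n F x -> contAt n G x -> contAt n (fun y => F y / G y) x.
Proof. intros; unfold Rdiv; apply contAt_mul; auto; apply contAt_inv; auto. Qed.

Lemma poly_contAt n r x : is_poly n r -> contAt n r x.
Proof.
  induction 1.
  - apply contAt_const.
  - apply contAt_var; auto.
  - apply contAt_add; auto.
  - apply contAt_mul; auto.
Qed.

Lemma shift0 x i : shift_pt x i 0 = x.
Proof. apply functional_extensionality; intros j; unfold shift_pt; destruct (Nat.eqb j i); ring. Qed.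

Lemma shift_shift x i a b : shift_pt (shift_pt x i a) i b = shift_pt x i (a + b).
Proof. apply functional_extensionality; intros j; unfold shift_pt; destruct (Nat.eqb j i); ring. Qed.

Lemma shift_other x i s j : j <> i -> shift_pt x i s j = x j.
Proof. intros H; unfold shift_pt; destruct (Nat.eqb_spec j i); [contradiction| auto]. Qed.

Lemma shift_same x i s : shift_pt x i s i = x i + s.
Proof. unfold shift_pt; rewrite Nat.eqb_refl; auto. Qed.

Lemma deriv_local f1 f2 s d : (exists del, 0 < del /\ forall t, Rabs (t - s) < del -> f1 t = f2 t) ->
  derivable_pt_lim f1 s d -> derivable_pt_lim f2 s d.
Proof.
  intros [del [Hdel Heq]] H eps He. destruct (H eps He) as [d' Hd'].
  assert (Hp : 0 < Rmin del d') by (apply Rmin_pos; [auto| apply cond_pos]).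
  exists (mkposreal _ Hp). intros h Hh Hhd. simpl in Hhd.
  rewrite <- !Heq.
  - apply Hd'; auto. eapply Rlt_le_trans; [exact Hhd| apply Rmin_r].
  - rewrite Rminus_diag, Rabs_R0; auto.
  - replace (s + h - s) with h by ring. eapply Rlt_le_trans; [exact Hhd| apply Rmin_l].
Qed.

Lemma deriv_shift phi t d : derivable_pt_lim (fun s => phi (t + s)) 0 d -> derivable_pt_lim phi t d.
Proof.
  intros H eps He. destruct (H eps He) as [del Hdel]. exists del. intros h Hh Hhd.
  specialize (Hdel h Hh Hhd). rewrite Rplus_0_l, Rplus_0_r in Hdel. auto.
Qed.

Section Main.
Variable n : nat.
Variables p q : pt -> R.
Variable g : nat -> pt -> R.
Hypothesis Hp : is_poly n p.
Hypothesis Hq : is_poly n q.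
Hypothesis Hder : forall i x, (i < n)%nat -> q x <> 0 ->
  derivable_pt_lim (fun t => p (shift_pt x i t) / q (shift_pt x i t)) 0 (g i x).

Definition fr x := p x / q x.
Local Notation f := fr.

Lemma line_deriv w i t : (i < n)%nat -> q (shift_pt w i t) <> 0 ->
  derivable_pt_lim (fun s => f (shift_pt w i s)) t (g i (shift_pt w i t)).
Proof.
  intros Hi Hqt. apply deriv_shift.
  assert (E : (fun s => f (shift_pt w i (t + s))) =
     (fun s => p (shift_pt (shift_pt w i t) i s) / q (shift_pt (shift_pt w i t) i s))).
  { apply functional_extensionality; intros s; rewrite shift_shift; reflexivity. }
  rewrite E. apply Hder; auto.
Qed.

Lemma lineMVI w i b c e : (i < n)%nat -> q w <> 0 -> q (shift_pt w i b) <> 0 ->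
  (forall s, Rmin 0 b <= s <= Rmax 0 b -> Rabs (g i (shift_pt w i s) - c) <= e) ->
  Rabs (f (shift_pt w i b) - f w - c * b) <= e * Rabs b.
Proof.
  intros Hi Hw Hb Hgb.
  destruct (Req_dec_T b 0) as [Hb0|Hb0].
  { subst b. rewrite shift0. replace (f w - f w - c*0) with 0 by ring.
    replace (Rabs 0) with 0 by (symmetry; apply Rabs_R0). lra. }
  destruct (poly_line n p Hp w i) as [Pl HPl].
  destruct (poly_line n q Hq w i) as [Ql HQl].
  pose (phi := fun s => f (shift_pt w i s)).
  assert (Ephi : forall s, phi s = rat1 Pl Ql s) by (intros; unfold phi, fr, rat1; rewrite HPl, HQl; auto).
  assert (Ephi' : rat1 Pl Ql = phi) by (apply functional_extensionality; intros; auto).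
  assert (HQ0 : ev Ql 0 <> 0) by (rewrite <- HQl, shift0; auto).
  assert (HQb : ev Ql b <> 0) by (rewrite <- HQl; auto).
  destruct (roots (length Ql) Ql (le_n _) (ex_intro _ 0 HQ0)) as [rl Hrl].
  pose (Lim := fun s => match excluded_middle_informative (exists L, forall eps, 0 < eps -> exists del, 0 < del /\
      forall t, t <> s -> Rabs (t - s) < del -> Rabs (phi t - L) < eps) with
      | left H => proj1_sig (constructive_indefinite_description _ H) | right _ => 0 end).
  pose (phit := fun s => if Req_dec_T (ev Ql s) 0 then Lim s else phi s).
  pose (a' := Rmin 0 b). pose (b' := Rmax 0 b).
  assert (Hab : a' < b' /\ (a' = 0 \/ a' = b) /\ (b' = 0 \/ b' = b)).
  { unfold a', b'; destruct (Rle_dec 0 b);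
    [rewrite Rmin_left, Rmax_right| rewrite Rmin_right, Rmax_left]; lra. }
  destruct Hab as [Hab [Ha' Hb']].
  assert (HgM : forall s, a' <= s <= b' -> Rabs (g i (shift_pt w i s)) <= Rabs c + e).
  { intros s Hs. specialize (Hgb s Hs).
    replace (g i (shift_pt w i s)) with (c + (g i (shift_pt w i s) - c)) by ring.
    eapply Rle_trans; [apply Rabs_triang| lra]. }
  assert (Hnr : forall s, ev Ql s <> 0 -> derivable_pt_lim phit s (g i (shift_pt w i s))).
  { intros s Hs. apply deriv_local with phi.
    - destruct (cont_elim _ _ (ev_cont Ql s) (Rabs (ev Ql s) / 2)) as [d [Hd Hc]].
      { assert (0 < Rabs (ev Ql s)) by (apply Rabs_pos_lt; auto). lra. }
      exists d; split; auto. intros t Ht. unfold phit.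
      destruct (Req_dec_T (ev Ql t) 0) as [E|E]; auto.
      specialize (Hc t Ht). rewrite E, Rminus_0_l, Rabs_Ropp in Hc.
      assert (0 < Rabs (ev Ql s)) by (apply Rabs_pos_lt; auto). lra.
    - apply line_deriv; auto. rewrite HQl; auto. }
  assert (Hcont : forall s, a' <= s <= b' -> continuity_pt phit s).
  { intros s Hs. destruct (Req_dec_T (ev Ql s) 0) as [Hr|Hr].
    - assert (Hs' : a' < s < b').
      { assert (Hsa : s <> a') by (intro E; rewrite E in Hr; destruct Ha' as [E'|E']; rewrite E' in Hr; auto).
        assert (Hsb : s <> b') by (intro E; rewrite E in Hr; destruct Hb' as [E'|E']; rewrite E' in Hr; auto).
        lra. }
      destruct (removable Pl Ql s (Rabs c + e) (Rmin (s - a') (b' - s))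
          (ex_intro _ 0 HQ0) Hr) as [[d0 [Hd0 Hiso]] [L HL]].
      + apply Rmin_pos; lra.
      + intros t Ht HQt. exists (g i (shift_pt w i t)). split.
        * rewrite Ephi'. apply line_deriv; auto. rewrite HQl; auto.
        * apply HgM. assert (Rmin (s - a') (b' - s) <= s - a') by apply Rmin_l.
          assert (Rmin (s - a') (b' - s) <= b' - s) by apply Rmin_r.
          destruct Ht as [_ Ht]. apply Rabs_def2 in Ht. lra.
      + rewrite Ephi' in HL.
        assert (Hex : exists L, forall eps, 0 < eps -> exists del, 0 < del /\
          forall t, t <> s -> Rabs (t - s) < del -> Rabs (phi t - L) < eps) by (exists L; auto).
        apply cont_intro. intros eps He.
        assert (HLim : phit s = Lim s) by (unfold phit; destruct (Req_dec_T (ev Ql s) 0); tauto).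
        unfold Lim in HLim. destruct (excluded_middle_informative _) as [Hex'|Hn]; [|tauto].
        destruct (constructive_indefinite_description _ Hex') as [L' HL']. simpl in HLim.
        destruct (HL' eps He) as [del [Hdel Ht]].
        exists (Rmin del d0); split; [apply Rmin_pos; auto|]. intros t Hts.
        destruct (Req_dec_T t s) as [E|E].
        { subst; rewrite Rminus_diag, Rabs_R0; auto. }
        assert (HQt : ev Ql t <> 0) by (apply Hiso; auto; eapply Rlt_le_trans; [exact Hts| apply Rmin_r]).
        replace (phit t) with (phi t) by (unfold phit; destruct (Req_dec_T (ev Ql t) 0); tauto).
        rewrite HLim. apply Ht; auto. eapply Rlt_le_trans; [exact Hts| apply Rmin_l].
    - apply derivable_continuous_pt. exists (g i (shift_pt w i s)). apply Hnr; auto. }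
  assert (HM := MVI phit c e rl a' b' Hab Hcont).
  assert (HM' : Rabs (phit b' - phit a' - c * (b' - a')) <= e * (b' - a')).
  { apply HM. intros t Ht Hn. exists (g i (shift_pt w i t)). split.
    - apply Hnr. intro E. apply Hn, Hrl; auto.
    - apply Hgb. fold a' b'. lra. }
  assert (E0 : phit 0 = f w).
  { unfold phit. destruct (Req_dec_T (ev Ql 0) 0); [tauto|]. unfold phi; rewrite shift0; auto. }
  assert (Eb : phit b = f (shift_pt w i b)).
  { unfold phit. destruct (Req_dec_T (ev Ql b) 0); [tauto|]. auto. }
  destruct Ha' as [Ha'|Ha'].
  - assert (b' = b) by (destruct Hb'; auto; lra). rewrite H, Ha', E0, Eb in HM'.
    rewrite (Rabs_right b) by lra. replace (b - 0) with b in HM' by ring. auto.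
  - assert (b' = 0) by (destruct Hb'; auto; lra). rewrite H, Ha', E0, Eb in HM'.
    rewrite (Rabs_left b) by lra.
    replace (f (shift_pt w i b) - f w - c * b) with (- (f w - f (shift_pt w i b) - c * (0 - b))) by ring.
    rewrite Rabs_Ropp. replace (e * - b) with (e * (0 - b)) by ring. auto.
Qed.

End Main.

Lemma le_eps a b C : 0 <= C -> (forall eps, 0 < eps -> a <= b + C * eps) -> a <= b.
Proof.
  intros HC H. destruct (Rle_dec a b) as [|Hn]; auto. exfalso.
  assert (Hab : 0 < a - b) by lra.
  specialize (H ((a - b) / (2 * (C + 1))) ltac:(apply Rdiv_lt_0_compat; lra)).
  assert (C * ((a - b) / (2 * (C + 1))) < a - b).
  { unfold Rdiv. rewrite Rinv_mult.
    assert (0 < / (C + 1)) by (apply Rinv_0_lt_compat; lra).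
    assert (C * / (C + 1) < 1).
    { apply (Rmult_lt_reg_r (C+1)); [lra|]. rewrite Rmult_assoc, Rinv_l by lra. lra. }
    assert (C * ((a - b) * (/ 2 * / (C + 1))) = (C * / (C+1)) * (a - b) / 2) by (unfold Rdiv; ring).
    rewrite H2. assert (0 <= C * / (C+1)) by (apply Rmult_le_pos; lra). nra. }
  lra.
Qed.

Lemma small_inv e : 0 < e -> exists N, / (INR N + 1) < e.
Proof.
  intros He. destruct (archimed_cor1 e He) as [N [HN HN0]]. exists N.
  assert (0 < INR N) by (apply lt_0_INR; auto).
  eapply Rlt_trans; [| exact HN]. apply Rinv_lt_contravar; nra.
Qed.

Lemma inv_mono a N : (N <= a)%nat -> / (INR a + 1) <= / (INR N + 1).
Proof.
  intros H. assert (INR N <= INR a) by (apply le_INR; auto).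
  assert (0 <= INR N) by apply pos_INR.
  apply Rinv_le_contravar; lra.
Qed.

Lemma inv_pos' k : 0 < / (INR k + 1).
Proof. apply Rinv_0_lt_compat. assert (0 <= INR k) by apply pos_INR. lra. Qed.

Lemma Kfrac K e : 0 <= K -> 0 < e -> K * (e / (K + 1)) < e.
Proof.
  intros HK He. apply (Rmult_lt_reg_r (K + 1)); [lra|].
  replace (K * (e / (K + 1)) * (K + 1)) with (K * e) by (field; lra). nra.
Qed.

Lemma finite_unif (P : nat -> R -> Prop) :
  (forall i d d', 0 < d' <= d -> P i d -> P i d') ->
  forall N, (forall i, (i < N)%nat -> exists d, 0 < d /\ P i d) ->
  exists d, 0 < d /\ forall i, (i < N)%nat -> P i d.
Proof.
  intros Hm N. induction N; intros H.
  - exists 1; split; [lra| intros; lia].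
  - destruct IHN as [d1 [Hd1 H1]]; [intros; apply H; lia|].
    destruct (H N) as [d2 [Hd2 H2]]; [lia|].
    exists (Rmin d1 d2); split; [apply Rmin_pos; auto|]. intros i Hi.
    destruct (Nat.eq_dec i N) as [->|Hne].
    + apply Hm with d2; auto. split; [apply Rmin_pos; auto| apply Rmin_r].
    + apply Hm with d1; [split; [apply Rmin_pos; auto| apply Rmin_l]| apply H1; lia].
Qed.

Lemma finite_max (h : nat -> R) N : exists M, forall i, (i < N)%nat -> h i <= M.
Proof.
  induction N.
  - exists 0; intros; lia.
  - destruct IHN as [M HM]. exists (Rmax M (h N)). intros i Hi.
    destruct (Nat.eq_dec i N) as [->|Hne]; [apply Rmax_r|].
    eapply Rle_trans; [apply HM; lia| apply Rmax_l].
Qed.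

Section Main2.
Variable n : nat.
Variables p q : pt -> R.
Variable g : nat -> pt -> R.
Variable a0 : pt.
Hypothesis Hp : is_poly n p.
Hypothesis Hq : is_poly n q.
Hypothesis Ha0 : q a0 <> 0.
Hypothesis Hg : forall i, (i < n)%nat -> continuous_Rn n (g i).
Hypothesis Hder : forall i x, (i < n)%nat -> q x <> 0 ->
  derivable_pt_lim (fun t => p (shift_pt x i t) / q (shift_pt x i t)) 0 (g i x).

Local Notation f := (fr p q).

Lemma gcont i x : (i < n)%nat -> contAt n (g i) x.
Proof. intros Hi. exact (Hg i Hi x). Qed.

Lemma f_cont x : q x <> 0 -> contAt n f x.
Proof. intros Hx. unfold fr. apply contAt_div; auto; apply poly_contAt; auto. Qed.

Lemma density x d : 0 < d -> exists y, q y <> 0 /\ box n x d y.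
Proof.
  intros Hd.
  assert (H : forall k, exists w, q w <> 0 /\ forall j, (j < k)%nat -> Rabs (w j - x j) < d).
  { induction k.
    - exists a0; split; auto; intros; lia.
    - destruct IHk as [w [Hw Hwk]].
      destruct (poly_line n q Hq w k) as [Ql HQl].
      assert (HQ0 : ev Ql 0 <> 0) by (rewrite <- HQl, shift0; auto).
      destruct (roots _ Ql (le_n _) (ex_intro _ 0 HQ0)) as [rl Hrl].
      destruct (avoid rl (x k - w k - d) (x k - w k + d)) as [t [Ht Hn]]; [lra|].
      exists (shift_pt w k t); split.
      + rewrite HQl; intro E; apply Hn, Hrl; auto.
      + intros j Hj. destruct (Nat.eq_dec j k) as [->|Hne].
        * rewrite shift_same. apply Rabs_def1; lra.
        * rewrite shift_other by auto. apply Hwk; lia. }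
  destruct (H n) as [y [Hy Hb]]. exists y; split; auto.
Qed.

Lemma stair x0 d M (HM : forall i u, (i < n)%nat -> box n x0 d u -> Rabs (g i u) <= M)
  y z rho eta : q y <> 0 -> box n x0 d y -> box n x0 d z -> 0 < eta ->
  (forall j, (j < n)%nat -> Rabs (y j - z j) <= rho) ->
  forall k, (k <= n)%nat -> exists w, q w <> 0 /\ box n x0 d w /\
    (forall j, (k <= j)%nat -> w j = y j) /\ (forall j, (j < k)%nat -> Rabs (w j - z j) < eta) /\
    Rabs (f w - f y) <= INR k * M * (rho + eta).
Proof.
  intros Hy Hby Hbz He Hr. induction k; intros Hk.
  - exists y; split; [auto| split; [auto| split; [auto| split; [intros; lia|]]]].
    rewrite Rminus_diag, Rabs_R0; simpl; lra.
  - destruct IHk as [w [Hw [Hbw [Hwy [Hwz Hf]]]]]; [lia|].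
    assert (Hkn : (k < n)%nat) by lia.
    assert (HM0 : 0 <= M) by (eapply Rle_trans; [apply Rabs_pos| apply (HM k w Hkn Hbw)]).
    destruct (poly_line n q Hq w k) as [Ql HQl].
    assert (HQ0 : ev Ql 0 <> 0) by (rewrite <- HQl, shift0; auto).
    destruct (roots _ Ql (le_n _) (ex_intro _ 0 HQ0)) as [rl Hrl].
    pose (lo := Rmax (z k - eta) (x0 k - d)). pose (hi := Rmin (z k + eta) (x0 k + d)).
    assert (Hzk := Hbz k Hkn). apply Rabs_def2 in Hzk.
    assert (Hwk := Hbw k Hkn). apply Rabs_def2 in Hwk.
    assert (Hlohi : lo < hi).
    { unfold lo, hi. apply Rmax_lub_lt; apply Rmin_glb_lt; lra. }
    destruct (avoid rl (lo - w k) (hi - w k)) as [t [Ht Hn]]; [lra|].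
    assert (Ht1 : z k - eta < w k + t < z k + eta).
    { assert (z k - eta <= lo) by apply Rmax_l. assert (hi <= z k + eta) by apply Rmin_l. lra. }
    assert (Ht2 : x0 k - d < w k + t < x0 k + d).
    { assert (x0 k - d <= lo) by apply Rmax_r. assert (hi <= x0 k + d) by apply Rmin_r. lra. }
    exists (shift_pt w k t). split; [|split; [|split; [|split]]].
    + rewrite HQl; intro E; apply Hn, Hrl; auto.
    + intros j Hj. destruct (Nat.eq_dec j k) as [->|Hne].
      * rewrite shift_same. apply Rabs_def1; lra.
      * rewrite shift_other by auto. apply Hbw; auto.
    + intros j Hj. rewrite shift_other by lia. apply Hwy; lia.
    + intros j Hj. destruct (Nat.eq_dec j k) as [->|Hne].
      * rewrite shift_same. apply Rabs_def1; lra.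
      * rewrite shift_other by auto. apply Hwz; lia.
    + assert (HL := lineMVI n p q g Hp Hq Hder w k t 0 M Hkn Hw).
      assert (Hqt : q (shift_pt w k t) <> 0) by (rewrite HQl; intro E; apply Hn, Hrl; auto).
      specialize (HL Hqt).
      assert (HL' : Rabs (f (shift_pt w k t) - f w - 0 * t) <= M * Rabs t).
      { apply HL. intros s Hs. rewrite Rminus_0_r. apply HM; auto.
        intros j Hj. destruct (Nat.eq_dec j k) as [->|Hne].
        - rewrite shift_same.
          destruct (Rle_dec 0 t); [rewrite Rmin_left, Rmax_right in Hs by lra| rewrite Rmin_right, Rmax_left in Hs by lra];
          apply Rabs_def1; lra.
        - rewrite shift_other by auto. apply Hbw; auto. }
      rewrite Rmult_0_l, Rminus_0_r in HL'.
      assert (Htb : Rabs t <= rho + eta).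
      { assert (Hyk := Hr k Hkn). rewrite <- (Hwy k (le_n _)) in Hyk.
        replace t with ((w k + t - z k) + (z k - w k)) by ring.
        eapply Rle_trans; [apply Rabs_triang|].
        rewrite <- Rabs_Ropp in Hyk. replace (- (w k - z k)) with (z k - w k) in Hyk by ring.
        assert (Rabs (w k + t - z k) < eta) by (apply Rabs_def1; lra). lra. }
      replace (f (shift_pt w k t) - f y) with ((f (shift_pt w k t) - f w) + (f w - f y)) by ring.
      eapply Rle_trans; [apply Rabs_triang|]. rewrite S_INR.
      assert (M * Rabs t <= M * (rho + eta)) by (apply Rmult_le_compat_l; auto).
      nra.
Qed.

Lemma local_M x : exists d M, 0 < d /\ 0 < M /\ forall i u, (i < n)%nat -> box n x d u -> Rabs (g i u) <= M.
Proof.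
  destruct (finite_unif (fun i d => forall u, box n x d u -> Rabs (g i u - g i x) < 1)) with n
    as [d [Hd Hu]].
  - intros i d d' Hdd H u Hu. apply H. eapply box_mono; [|exact Hu]; lra.
  - intros i Hi. destruct (gcont i x Hi 1) as [d [Hd H]]; [lra|]. exists d; auto.
  - destruct (finite_max (fun i => Rabs (g i x)) n) as [M HM].
    exists d, (Rmax M 0 + 1); split; auto; split.
    + assert (0 <= Rmax M 0) by apply Rmax_r. lra.
    + intros i u Hi Hb. specialize (Hu i Hi u Hb). specialize (HM i Hi). simpl in HM.
      assert (M <= Rmax M 0) by apply Rmax_l.
      replace (g i u) with (g i x + (g i u - g i x)) by ring.
      eapply Rle_trans; [apply Rabs_triang| lra].
Qed.

Lemma local_lip x : exists d K, 0 < d /\ 0 <= K /\ forall y z rho, q y <> 0 -> q z <> 0 ->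
  box n x d y -> box n x d z -> (forall j, (j < n)%nat -> Rabs (y j - z j) <= rho) ->
  Rabs (f y - f z) <= K * rho.
Proof.
  destruct (local_M x) as [d [M [Hd [HM0 HM]]]].
  exists d, (INR n * M); split; auto; split.
  { apply Rmult_le_pos; [apply pos_INR| lra]. }
  intros y z rho Hy Hz Hby Hbz Hr.
  apply (le_eps _ _ (INR n * M + 1)).
  { assert (0 <= INR n) by apply pos_INR. nra. }
  intros eps He.
  destruct (f_cont z Hz eps He) as [dz [Hdz Hfz]].
  destruct (stair x d M HM y z rho (Rmin eps dz) Hy Hby Hbz (Rmin_pos _ _ He Hdz) Hr n (le_n _))
    as [w [Hw [_ [_ [Hwz Hfw]]]]].
  assert (Hfwz : Rabs (f w - f z) < eps).
  { apply Hfz. intros j Hj. eapply Rlt_le_trans; [apply Hwz; auto| apply Rmin_r]. }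
  assert (INR n * M * (rho + Rmin eps dz) <= INR n * M * (rho + eps)).
  { apply Rmult_le_compat_l; [apply Rmult_le_pos; [apply pos_INR| lra]|].
    assert (Rmin eps dz <= eps) by apply Rmin_l. lra. }
  replace (f y - f z) with (- (f w - f y) + (f w - f z)) by ring.
  eapply Rle_trans; [apply Rabs_triang|]. rewrite Rabs_Ropp. nra.
Qed.

Definition limD x L := forall eps, 0 < eps -> exists d, 0 < d /\
  forall y, q y <> 0 -> box n x d y -> Rabs (f y - L) < eps.

Lemma limD_unique x L1 L2 : limD x L1 -> limD x L2 -> L1 = L2.
Proof.
  intros H1 H2. cut (Rabs (L1 - L2) <= 0).
  { intros H. apply Rminus_diag_uniq. destruct (Rcase_abs (L1 - L2));
    [rewrite Rabs_left in H|rewrite Rabs_right in H]; lra. }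
  apply (le_eps _ 0 2); [lra|]. intros eps He.
  destruct (H1 eps He) as [d1 [Hd1 A]]. destruct (H2 eps He) as [d2 [Hd2 B]].
  destruct (density x (Rmin d1 d2)) as [y [Hy Hb]]; [apply Rmin_pos; auto|].
  specialize (A y Hy (box_mono _ _ _ _ _ (Rmin_l _ _) Hb)).
  specialize (B y Hy (box_mono _ _ _ _ _ (Rmin_r _ _) Hb)).
  replace (L1 - L2) with (- (f y - L1) + (f y - L2)) by ring.
  eapply Rle_trans; [apply Rabs_triang|]. rewrite Rabs_Ropp. lra.
Qed.

Lemma lim_exists x : exists L, limD x L.
Proof.
  destruct (local_lip x) as [d [K [Hd [HK HL]]]].
  assert (Hs : forall k, {y | q y <> 0 /\ box n x (Rmin d (/ (INR k + 1))) y}).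
  { intros k. apply constructive_indefinite_description. apply density.
    apply Rmin_pos; auto; apply inv_pos'. }
  pose (yk := fun k => proj1_sig (Hs k)).
  assert (Hyk : forall k, q (yk k) <> 0 /\ box n x (Rmin d (/ (INR k + 1))) (yk k))
    by (intros k; unfold yk; destruct (Hs k); auto).
  assert (Hclose : forall a N, (N <= a)%nat -> forall y, box n x (Rmin d (/ (INR N + 1))) y ->
      q y <> 0 -> Rabs (f y - f (yk a)) <= K * (2 / (INR N + 1))).
  { intros a N HaN y Hb Hy. destruct (Hyk a) as [Hqa Hba].
    apply HL; auto.
    - eapply box_mono; [apply Rmin_l| exact Hb].
    - eapply box_mono; [apply Rmin_l| exact Hba].
    - intros j Hj. specialize (Hb j Hj). specialize (Hba j Hj).
      assert (Rmin d (/ (INR N + 1)) <= / (INR N + 1)) by apply Rmin_r.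
      assert (Rmin d (/ (INR a + 1)) <= / (INR a + 1)) by apply Rmin_r.
      assert (/ (INR a + 1) <= / (INR N + 1)) by (apply inv_mono; auto).
      replace (y j - yk a j) with ((y j - x j) - (yk a j - x j)) by ring.
      eapply Rle_trans; [apply Rabs_triang|]. rewrite Rabs_Ropp. unfold Rdiv. lra. }
  assert (Hbm : forall b N, (N <= b)%nat -> box n x (Rmin d (/ (INR N + 1))) (yk b)).
  { intros b N Hb. destruct (Hyk b) as [_ Hbb]. eapply box_mono; [| exact Hbb].
    apply Rmin_glb; [apply Rmin_l| eapply Rle_trans; [apply Rmin_r| apply inv_mono; auto]]. }
  assert (Hc : Cauchy_crit (fun k => f (yk k))).
  { intros eps He. destruct (small_inv (eps / (2 * (K + 1)))) as [N HN].
    { apply Rdiv_lt_0_compat; lra. }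
    exists N. intros a b Ha Hb. unfold Rdist.
    destruct (Hyk b) as [Hqb _].
    assert (H := Hclose a N Ha (yk b) (Hbm b N Hb) Hqb).
    rewrite Rabs_minus_sym.
    assert (H2 : 2 / (INR N + 1) < eps / (K + 1)).
    { unfold Rdiv in *. rewrite Rinv_mult in HN. lra. }
    assert (K * (2 / (INR N + 1)) <= K * (eps / (K + 1))) by (apply Rmult_le_compat_l; lra).
    assert (K * (eps / (K + 1)) < eps) by (apply Kfrac; auto).
    lra. }
  destruct (Rcomplete.R_complete _ Hc) as [l Hl].
  exists l. intros eps He.
  destruct (Hl (eps / 3)) as [N1 HN1]; [lra|].
  destruct (small_inv (eps / (3 * (K + 1)))) as [N2 HN2]; [apply Rdiv_lt_0_compat; lra|].
  pose (N := Nat.max N1 N2).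
  exists (Rmin d (/ (INR N + 1))). split; [apply Rmin_pos; auto; apply inv_pos'|].
  intros y Hy Hb.
  assert (A := Hclose N N (le_n _) y Hb Hy).
  assert (B := HN1 N (Nat.le_max_l _ _)). unfold Rdist in B.
  assert (C : / (INR N + 1) <= / (INR N2 + 1)) by (apply inv_mono; apply Nat.le_max_r).
  assert (H2 : 2 / (INR N + 1) < (2 * eps / 3) / (K + 1)).
  { unfold Rdiv in *. rewrite Rinv_mult in HN2. lra. }
  assert (K * (2 / (INR N + 1)) <= K * ((2 * eps / 3) / (K + 1))) by (apply Rmult_le_compat_l; lra).
  assert (K * ((2 * eps / 3) / (K + 1)) < 2 * eps / 3) by (apply Kfrac; lra).
  replace (f y - l) with ((f y - f (yk N)) + (f (yk N) - l)) by ring.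
  eapply Rle_lt_trans; [apply Rabs_triang| lra].
Qed.

Definition F x := proj1_sig (constructive_indefinite_description _ (lim_exists x)).

Lemma F_spec x : limD x (F x).
Proof. unfold F. destruct (constructive_indefinite_description _ _); auto. Qed.

Lemma F_rep x p' q' : is_poly n p' -> is_poly n q' -> same_rat p q p' q' -> q' x <> 0 ->
  F x = p' x / q' x.
Proof.
  intros Hp' Hq' Hs Hx. apply (limD_unique x); [apply F_spec|].
  intros eps He.
  assert (Hc : contAt n (fun y => p' y / q' y) x) by (apply contAt_div; auto; apply poly_contAt; auto).
  destruct (Hc eps He) as [d1 [Hd1 H1]].
  assert (Hb : 0 < Rabs (q' x)) by (apply Rabs_pos_lt; auto).
  destruct (poly_contAt n q' x Hq' (Rabs (q' x) / 2)) as [d2 [Hd2 H2]]; [lra|].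
  exists (Rmin d1 d2); split; [apply Rmin_pos; auto|]. intros y Hy Hby.
  specialize (H1 y (box_mono _ _ _ _ _ (Rmin_l _ _) Hby)).
  specialize (H2 y (box_mono _ _ _ _ _ (Rmin_r _ _) Hby)).
  assert (Hqy : q' y <> 0).
  { intro E. rewrite E, Rminus_0_l, Rabs_Ropp in H2. lra. }
  replace (f y) with (p' y / q' y); auto.
  unfold fr. specialize (Hs y). field_simplify_eq; auto. lra.
Qed.

Lemma F_f x : q x <> 0 -> F x = f x.
Proof. intros Hx. apply F_rep; auto. intros y; reflexivity. Qed.

Lemma F_lip x : exists d K, 0 < d /\ 0 <= K /\ forall y z rho,
  box n x d y -> box n x d z -> (forall j, (j < n)%nat -> Rabs (y j - z j) <= rho) ->
  Rabs (F y - F z) <= K * rho.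
Proof.
  destruct (local_lip x) as [d0 [K [Hd0 [HK HL]]]].
  exists (d0 / 2), K; split; [lra|]; split; auto.
  intros y z rho Hby Hbz Hr.
  apply (le_eps _ _ (2 * K + 2)); [lra|]. intros eps He.
  destruct (F_spec y eps He) as [dy [Hdy Hy]].
  destruct (F_spec z eps He) as [dz [Hdz Hz]].
  destruct (density y (Rmin (Rmin dy (d0 / 2)) eps)) as [y' [Hy' Hby']].
  { repeat apply Rmin_pos; lra. }
  destruct (density z (Rmin (Rmin dz (d0 / 2)) eps)) as [z' [Hz' Hbz']].
  { repeat apply Rmin_pos; lra. }
  assert (Ry : forall j, (j < n)%nat -> Rabs (y' j - y j) < dy /\ Rabs (y' j - y j) < d0 / 2 /\ Rabs (y' j - y j) < eps).
  { intros j Hj. specialize (Hby' j Hj).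
    assert (Rmin (Rmin dy (d0 / 2)) eps <= Rmin dy (d0/2)) by apply Rmin_l.
    assert (Rmin (Rmin dy (d0 / 2)) eps <= eps) by apply Rmin_r.
    assert (Rmin dy (d0/2) <= dy) by apply Rmin_l. assert (Rmin dy (d0/2) <= d0/2) by apply Rmin_r. lra. }
  assert (Rz : forall j, (j < n)%nat -> Rabs (z' j - z j) < dz /\ Rabs (z' j - z j) < d0 / 2 /\ Rabs (z' j - z j) < eps).
  { intros j Hj. specialize (Hbz' j Hj).
    assert (Rmin (Rmin dz (d0 / 2)) eps <= Rmin dz (d0/2)) by apply Rmin_l.
    assert (Rmin (Rmin dz (d0 / 2)) eps <= eps) by apply Rmin_r.
    assert (Rmin dz (d0/2) <= dz) by apply Rmin_l. assert (Rmin dz (d0/2) <= d0/2) by apply Rmin_r. lra. }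
  assert (A : Rabs (f y' - F y) < eps) by (apply Hy; auto; intros j Hj; apply Ry; auto).
  assert (B : Rabs (f z' - F z) < eps) by (apply Hz; auto; intros j Hj; apply Rz; auto).
  assert (C : Rabs (f y' - f z') <= K * (rho + 2 * eps)).
  { apply HL; auto.
    - intros j Hj. destruct (Ry j Hj) as [_ [R1 _]]. specialize (Hby j Hj).
      replace (y' j - x j) with ((y' j - y j) + (y j - x j)) by ring.
      eapply Rle_lt_trans; [apply Rabs_triang| lra].
    - intros j Hj. destruct (Rz j Hj) as [_ [R1 _]]. specialize (Hbz j Hj).
      replace (z' j - x j) with ((z' j - z j) + (z j - x j)) by ring.
      eapply Rle_lt_trans; [apply Rabs_triang| lra].
    - intros j Hj. destruct (Ry j Hj) as [_ [_ R1]]. destruct (Rz j Hj) as [_ [_ R2]].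
      specialize (Hr j Hj).
      replace (y' j - z' j) with ((y' j - y j) + (y j - z j) - (z' j - z j)) by ring.
      eapply Rle_trans; [apply Rabs_triang|]. eapply Rle_trans; [apply Rplus_le_compat_r, Rabs_triang|].
      rewrite Rabs_Ropp. lra. }
  replace (F y - F z) with (- (f y' - F y) + (f y' - f z') + (f z' - F z)) by ring.
  eapply Rle_trans; [apply Rabs_triang|]. eapply Rle_trans; [apply Rplus_le_compat_r, Rabs_triang|].
  rewrite Rabs_Ropp. nra.
Qed.

Lemma F_cont : continuous_Rn n F.
Proof.
  intros x eps He.
  destruct (F_lip x) as [d [K [Hd [HK HL]]]].
  exists (Rmin d (eps / (K + 1))); split; [apply Rmin_pos; [auto| apply Rdiv_lt_0_compat; lra]|].
  intros y Hy.
  assert (H : Rabs (F y - F x) <= K * Rmin d (eps / (K + 1))).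
  { apply HL.
    - intros j Hj. eapply Rlt_le_trans; [apply Hy; auto| apply Rmin_l].
    - intros j Hj. rewrite Rminus_diag, Rabs_R0; auto.
    - intros j Hj. left; apply Hy; auto. }
  assert (K * Rmin d (eps / (K + 1)) <= K * (eps / (K + 1))) by (apply Rmult_le_compat_l; [auto| apply Rmin_r]).
  assert (K * (eps / (K + 1)) < eps) by (apply Kfrac; auto).
  lra.
Qed.

Lemma F_deriv i x : (i < n)%nat -> derivable_pt_lim (fun t => F (shift_pt x i t)) 0 (g i x).
Proof.
  intros Hi eps He. set (c := g i x).
  destruct (gcont i x Hi (eps / 2)) as [dg [Hdg Hgc]]; [lra|].
  assert (Main : forall h, Rabs h < dg / 2 -> Rabs (F (shift_pt x i h) - F x - c * h) <= eps / 2 * Rabs h).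
  { intros h Hh.
    apply (le_eps _ _ (2 + eps / 2 + Rabs c)); [assert (0 <= Rabs c) by apply Rabs_pos; lra|].
    intros eta Heta.
    destruct (F_cont (shift_pt x i h) eta Heta) as [d1 [Hd1 H1]].
    destruct (F_cont x eta Heta) as [d2 [Hd2 H2]].
    pose (r1 := Rmin (Rmin (d1 / 2) d2) (dg / 4)).
    assert (Hr1 : 0 < r1) by (unfold r1; repeat apply Rmin_pos; lra).
    assert (Hr1a : r1 <= d1 / 2) by (unfold r1; eapply Rle_trans; apply Rmin_l).
    assert (Hr1b : r1 <= d2) by (unfold r1; eapply Rle_trans; [apply Rmin_l| apply Rmin_r]).
    assert (Hr1c : r1 <= dg / 4) by (unfold r1; apply Rmin_r).
    destruct (density x r1 Hr1) as [y [Hy Hby]].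
    pose (r2 := Rmin (Rmin (d1 / 2) (dg / 4)) eta).
    assert (Hr2 : 0 < r2) by (unfold r2; repeat apply Rmin_pos; lra).
    assert (Hr2a : r2 <= d1 / 2) by (unfold r2; eapply Rle_trans; apply Rmin_l).
    assert (Hr2b : r2 <= dg / 4) by (unfold r2; eapply Rle_trans; [apply Rmin_l| apply Rmin_r]).
    assert (Hr2c : r2 <= eta) by (unfold r2; apply Rmin_r).
    destruct (poly_line n q Hq y i) as [Ql HQl].
    assert (HQ0 : ev Ql 0 <> 0) by (rewrite <- HQl, shift0; auto).
    destruct (roots _ Ql (le_n _) (ex_intro _ 0 HQ0)) as [rl Hrl].
    destruct (avoid rl (h - r2) (h + r2)) as [t [Ht Hn]]; [lra|].
    assert (Hqt : q (shift_pt y i t) <> 0) by (rewrite HQl; intro E; apply Hn, Hrl; auto).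
    assert (Hyi : Rabs (y i - x i) < r1) by (apply Hby; auto).
    assert (Htabs : Rabs t < Rabs h + r2).
    { replace t with (h + (t - h)) by ring. eapply Rle_lt_trans; [apply Rabs_triang|].
      assert (Rabs (t - h) < r2) by (apply Rabs_def1; lra). lra. }
    assert (HL := lineMVI n p q g Hp Hq Hder y i t c (eps / 2) Hi Hy Hqt).
    assert (HL' : Rabs (f (shift_pt y i t) - f y - c * t) <= eps / 2 * Rabs t).
    { apply HL. intros s Hs. left. apply Hgc. intros j Hj.
      destruct (Nat.eq_dec j i) as [->|Hne].
      - rewrite shift_same.
        assert (Rabs s <= Rabs t).
        { destruct (Rle_dec 0 t); [rewrite Rmin_left, Rmax_right in Hs by lra| rewrite Rmin_right, Rmax_left in Hs by lra];
          [rewrite (Rabs_right t), Rabs_right by lra| rewrite (Rabs_left t) by lra; apply Rabs_le]; lra. }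
        replace (y i + s - x i) with ((y i - x i) + s) by ring.
        eapply Rle_lt_trans; [apply Rabs_triang| lra].
      - rewrite shift_other by auto. eapply Rlt_le_trans; [apply Hby; auto| lra]. }
    assert (A : Rabs (F (shift_pt y i t) - F (shift_pt x i h)) < eta).
    { apply H1. intros j Hj. destruct (Nat.eq_dec j i) as [->|Hne].
      - rewrite !shift_same.
        replace (y i + t - (x i + h)) with ((y i - x i) + (t - h)) by ring.
        assert (Rabs (t - h) < r2) by (apply Rabs_def1; lra).
        eapply Rle_lt_trans; [apply Rabs_triang| lra].
      - rewrite !shift_other by auto. eapply Rlt_le_trans; [apply Hby; auto| lra]. }
    assert (B : Rabs (F y - F x) < eta) by (apply H2; intros j Hj; eapply Rlt_le_trans; [apply Hby; auto| lra]).
    rewrite (F_f _ Hqt) in A. rewrite (F_f _ Hy) in B.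
    replace (F (shift_pt x i h) - F x - c * h) with
      (- (f (shift_pt y i t) - F (shift_pt x i h)) + (f (shift_pt y i t) - f y - c * t) + (f y - F x) + c * (t - h)) by ring.
    eapply Rle_trans; [apply Rabs_triang|].
    eapply Rle_trans; [apply Rplus_le_compat_r, Rabs_triang|].
    eapply Rle_trans; [apply Rplus_le_compat_r, Rplus_le_compat_r, Rabs_triang|].
    rewrite Rabs_Ropp, Rabs_mult.
    assert (Rabs (t - h) < r2) by (apply Rabs_def1; lra).
    assert (Rabs c * Rabs (t - h) <= Rabs c * eta) by (apply Rmult_le_compat_l; [apply Rabs_pos| lra]).
    assert (eps / 2 * Rabs t <= eps / 2 * (Rabs h + eta)) by (apply Rmult_le_compat_l; lra).
    nra. }
  assert (Hp2 : 0 < dg / 2) by lra.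
  exists (mkposreal _ Hp2). intros h Hh Hhd. simpl in Hhd.
  rewrite Rplus_0_l, shift0.
  specialize (Main h Hhd).
  assert (Hha : 0 < Rabs h) by (apply Rabs_pos_lt; auto).
  replace ((F (shift_pt x i h) - F x) / h - c) with ((F (shift_pt x i h) - F x - c * h) / h) by (field; auto).
  unfold Rdiv. rewrite Rabs_mult, Rabs_inv.
  apply (Rmult_lt_reg_r (Rabs h)); auto. rewrite Rmult_assoc, Rinv_l by lra. nra.
Qed.

End Main2.

Theorem lemma2p13 (n : nat) (p q : pt -> R) :
  rat_rep n p q ->
  codim_ge n (pol n p q) 2 ->
  (exists g : nat -> pt -> R,
     (forall i, (i < n)%nat -> continuous_Rn n (g i)) /\
     (forall i x p' q', (i < n)%nat ->
        is_poly n p' -> is_poly n q' -> same_rat p q p' q' -> q' x <> 0 ->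
        derivable_pt_lim (fun t => p' (shift_pt x i t) / q' (shift_pt x i t)) 0
                         (g i x))) ->
  exists F : pt -> R,
    continuous_Rn n F /\
    (forall x p' q',
       is_poly n p' -> is_poly n q' -> same_rat p q p' q' -> q' x <> 0 ->
       F x = p' x / q' x) /\
    regulous1 n F.
Proof.
  intros [Hp [Hq [a0 Ha0]]] _ [g [Hg Hd]].
  assert (Hder : forall i x, (i < n)%nat -> q x <> 0 ->
    derivable_pt_lim (fun t => p (shift_pt x i t) / q (shift_pt x i t)) 0 (g i x)).
  { intros i x Hi Hx. apply Hd; auto. intros y; reflexivity. }
  exists (F n p q g a0 Hp Hq Ha0 Hg Hder).
  split; [apply F_cont|]. split.
  { intros x p' q' Hp' Hq' Hs Hx. apply F_rep; auto. }
  split.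
  - split; [apply F_cont|]. exists g. split; auto. intros i x Hi. apply F_deriv; auto.
  - exists p, q. split; [split; [auto| split; [auto| exists a0; auto]]|].
    exists (fun x => q x <> 0). split; [|split; [exists a0; auto|]].
    + exists (fun h => h = q). split; [intros h E; subst; auto|].
      intros x; split.
      * intros H h E; subst. apply NNPP; auto.
      * intros H Hn. apply Hn, H; auto.
    + intros x Hx. exists p, q. split; [auto| split; [auto| split; [intros y; reflexivity| split; auto]]].
      apply F_f; auto.
Qed.
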